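(* Let $k\ge 2$ and let $G$ be a connected graph with vertex set $\{1,\ldots,n\}$, $n\ge 2$, such that for every $i=1,\ldots,n-1$ there are at most two edges $(u,v)$ of $G$ with $u\le i<v$, and such that exactly $k$ vertices of $G$ are separating with respect to this numbering. Then $G$ is a subgraph of some chain of $k-1$ cycles $Z_1,\ldots,Z_{k-1}$ with distinguished vertices $a_j,b_j$ in which $a_1=1$ and $b_{k-1}=n$.
   Context: For a graph with vertex set $\{1,\ldots,n\}$, a vertex $i$ is called separating if there is no edge $(u,v)$ of the graph with $u<i<v$; otherwise it is non-separating. A chain of $m$ cycles is a union of $m$ cycles $Z_1,\ldots,Z_m$ together with vertices $a_j,b_j\in Z_j$ ($j=1,\ldots,m$) such that $Z_i\cap Z_j=\emptyset$ whenever $|i-j|>1$, and $Z_{j-1}\cap Z_j=\{b_{j-1}\}=\{a_j\}$ for every $j=2,\ldots,m$. ''Subgraph'' means that $G$ is contained in the chain as a subgraph, with the vertex $1$ of $G$ equal to $a_1$ and the vertex $n$ of $G$ equal to $b_{k-1}$. *)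

(* Defs.v *)
From mathcomp Require Import all_boot.
Set Implicit Arguments. Unset Strict Implicit. Unset Printing Implicit Defensive.

(* A graph G on vertex set {1,..,n} is encoded as a simple graph on 'I_n,
   vertex i (1-based) being the ordinal with value i-1.  The edge relation
   e is assumed symmetric and irreflexive. *)
Definition simple_graph (n : nat) (e : rel 'I_n) : Prop :=
  symmetric e /\ irreflexive e.

Definition connected_graph (n : nat) (e : rel 'I_n) : Prop :=
  forall x y : 'I_n, connect e x y.

Definition cut_size (n : nat) (e : rel 'I_n) (i : nat) : nat :=
  #|[set p : 'I_n * 'I_n | e p.1 p.2 && (p.1 <= i < p.2)]|.

Definition separating (n : nat) (e : rel 'I_n) (i : 'I_n) : bool :=
  ~~ [exists u : 'I_n, exists v : 'I_n, e u v && (u < i < v)].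

Definition is_cycle (c : seq nat) : bool := uniq c && (3 <= size c).

Definition cycle_edge (c : seq nat) (x y : nat) : bool :=
  (x \in c) && (y \in c) && ((next c x == y) || (next c y == x)).

(* Chain of m cycles Z_1..Z_m (0-indexed here: Z 0 .. Z (m-1)) with
   distinguished vertices a_j, b_j in Z_j. *)
Definition chain_of_cycles (m : nat) (Z : nat -> seq nat) (a b : nat -> nat) : Prop :=
  [/\ forall j, j < m -> [/\ is_cycle (Z j), a j \in Z j & b j \in Z j],
      forall i j, i < m -> j < m -> i.+1 < j ->
        forall x, ~~ ((x \in Z i) && (x \in Z j)) &
      forall j, 0 < j < m ->
        (forall x, ((x \in Z j.-1) && (x \in Z j)) = (x == b j.-1)) /\ a j = b j.-1].

Definition chain_edge (m : nat) (Z : nat -> seq nat) (x y : nat) : Prop :=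
  exists2 j, j < m & cycle_edge (Z j) x y.

(* Main.v *)
Require Import Defs.
From mathcomp Require Import all_boot zify.
Set Implicit Arguments. Unset Strict Implicit. Unset Printing Implicit Defensive.

Lemma next_consec (T : eqType) (p q : seq T) x y :
  uniq (p ++ x :: y :: q) -> next (p ++ x :: y :: q) x = y.
Proof.
move=> U; rewrite next_nth mem_cat inE eqxx orbT.
case: p U => [|h p] U /=; first by rewrite eqxx.
have hx : x \notin h :: p.
  by move: U; rewrite cat_uniq => /and3P [_ /hasPn H _]; apply: H; rewrite inE eqxx.
move: hx; rewrite inE negb_or eq_sym => /andP [/negbTE -> hx].
rewrite index_cat (negbTE hx) /= nth_cat.
by rewrite eqxx addn0 ltnNge leqnSn /= subSn // subnn.
Qed.

Lemma iota_split a m u : a <= u < a + m ->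
  iota a m = iota a (u - a) ++ u :: iota u.+1 (a + m - u.+1).
Proof.
move=> h.
have hm : m = (u - a) + (a + m - u.+1).+1 by lia.
rewrite {1}hm iotaD /=.
by have -> : a + (u - a) = u by lia.
Qed.

Lemma consec (Q : pred nat) a m u w : a <= u -> u < w -> w < a + m -> Q u -> Q w ->
  (forall y, u < y < w -> ~~ Q y) -> exists p q, filter Q (iota a m) = p ++ u :: w :: q.
Proof.
move=> h1 h2 h3 qu qw hb.
rewrite (@iota_split a m u) ?filter_cat /=; last by lia.
rewrite qu (@iota_split u.+1 (a + m - u.+1) w) ?filter_cat /=; last by lia.
rewrite qw.
have -> : [seq x <- iota u.+1 (w - u.+1) | Q x] = [::].
  rewrite (@eq_in_filter _ Q pred0) ?filter_pred0 // => y.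
  by rewrite mem_iota => hy; apply/negbTE/hb; lia.
by eexists; eexists.
Qed.

Lemma rev_mid (T : Type) (p q : seq T) x y :
  rev (p ++ x :: y :: q) = rev q ++ y :: x :: rev p.
Proof. by rewrite rev_cat !rev_cons -!cats1 -!catA. Qed.

Lemma uniq3 (s t : nat) A X : s \notin A -> s != t -> s \notin X -> uniq A ->
  t \notin A -> (forall y, y \in A -> y \notin X) -> t \notin X -> uniq X ->
  uniq (s :: A ++ t :: X).
Proof.
move=> h1 h2 h3 h4 h5 h6 h7 h8.
rewrite /= mem_cat inE !negb_or h1 h2 h3 cat_uniq h4 /= h7 h8 /= andbT.
rewrite negb_or h5 /=; apply/hasPn => y hy; apply/negP => hA; by move: (h6 y hA); rewrite hy.
Qed.

Section Main.
Variables (n : nat) (e : rel 'I_n).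
Hypothesis Hsym : symmetric e.
Hypothesis Hirr : irreflexive e.
Hypothesis Hcut : forall i, 1 <= i <= n.-1 -> cut_size e i.-1 <= 2.
Hypothesis Hiso : forall x : 'I_n, exists y, e x y.

Definition E (u w : nat) : bool :=
  [exists x : 'I_n, exists y : 'I_n, (val x == u) && (val y == w) && e x y].

Lemma Eord u w : E u w -> exists x y : 'I_n, [/\ val x = u, val y = w & e x y].
Proof.
by case/existsP=> x /existsP [y /andP [/andP [/eqP hx /eqP hy] hxy]]; exists x, y.
Qed.

Lemma EP (x y : 'I_n) : E x y = e x y.
Proof.
apply/idP/idP => [/Eord [x' [y' [h1 h2 h]]]|h].
  by move: h; rewrite (val_inj h1) (val_inj h2).
by apply/existsP; exists x; apply/existsP; exists y; rewrite !eqxx.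
Qed.

Lemma E_lt u w : E u w -> u < n /\ w < n.
Proof. by case/Eord=> x [y [<- <- _]]; split; apply: ltn_ord. Qed.

Lemma E_sym u w : E u w -> E w u.
Proof. by case/Eord=> x [y [<- <- h]]; rewrite EP Hsym. Qed.

Lemma E_irr u : E u u -> False.
Proof.
case/Eord=> x [y [hx hy h]].
have exy : x = y by apply: val_inj; rewrite /= hx hy.
by move: h; rewrite exy Hirr.
Qed.

Lemma cut3 i a1 b1 a2 b2 a3 b3 : i.+1 < n ->
  E a1 b1 -> E a2 b2 -> E a3 b3 ->
  a1 <= i < b1 -> a2 <= i < b2 -> a3 <= i < b3 ->
  (a1, b1) != (a2, b2) -> (a1, b1) != (a3, b3) -> (a2, b2) != (a3, b3) -> False.
Proof.
move=> hi /Eord [x1 [y1 [<- <- e1]]] /Eord [x2 [y2 [<- <- e2]]]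
  /Eord [x3 [y3 [<- <- e3]]] i1 i2 i3 d12 d13 d23.
have := Hcut (i := i.+1); rewrite /= => /(_ ltac:(lia)).
rewrite /cut_size.
set C := [set _ | _].
have sub : [set (x1, y1); (x2, y2); (x3, y3)] \subset C.
  apply/subsetP => p; rewrite !inE => /orP [/orP [] | ] /eqP -> /=;
    by rewrite ?e1 ?e2 ?e3.
have := subset_leq_card sub.
rewrite -setUA cardsU1 cards2 !inE.
have n12 : (x1, y1) != (x2, y2).
  by apply: contra d12 => /eqP [-> ->].
have n13 : (x1, y1) != (x3, y3).
  by apply: contra d13 => /eqP [-> ->].
have n23 : (x2, y2) != (x3, y3).
  by apply: contra d23 => /eqP [-> ->].
rewrite (negbTE n12) (negbTE n13) n23 /=.
lia.
Qed.


Definition Sep (v : nat) : bool :=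
  ~~ [exists u : 'I_n, exists w : 'I_n, e u w && (u < v < w)].

Lemma Sep_edge v u w : Sep v -> E u w -> u < v -> v < w -> False.
Proof.
move=> /negP hs /Eord [x [y [hx hy h]]] hu hw; apply: hs.
by apply/existsP; exists x; apply/existsP; exists y; rewrite h hx hy hu hw.
Qed.

Lemma nSepP v : ~~ Sep v -> exists p q, [/\ E p q, p < v & v < q].
Proof.
rewrite negbK => /existsP [x /existsP [y /andP [h /andP [h1 h2]]]].
by exists x, y; rewrite EP.
Qed.

Lemma nSep_lt v : ~~ Sep v -> 0 < v /\ v.+1 < n.
Proof. by case/nSepP=> p [q [/E_lt [_ hq] h1 h2]]; lia. Qed.

Lemma left1 v u u' : ~~ Sep v -> E u v -> E u' v -> u < v -> u' < v -> u = u'.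
Proof.
move=> hs h1 h2 l1 l2; have [_ hv] := nSep_lt hs.
case/nSepP: hs => p [q [hpq hp hq]].
case: (eqVneq u u') => // neq.
exfalso; apply: (@cut3 v.-1 p q u v u' v) => //; try lia.
- by apply/eqP => [[_ ]]; lia.
- by apply/eqP => [[_ ]]; lia.
- by apply/eqP => [[ ]]; move/eqP: neq.
Qed.

Lemma right1 v w w' : ~~ Sep v -> E v w -> E v w' -> v < w -> v < w' -> w = w'.
Proof.
move=> hs h1 h2 l1 l2; have [_ hv] := nSep_lt hs.
case/nSepP: hs => p [q [hpq hp hq]].
case: (eqVneq w w') => // neq.
exfalso; apply: (@cut3 v p q v w v w') => //; try lia.
- by apply/eqP => [[ ]]; lia.
- by apply/eqP => [[ ]]; lia.
- by apply/eqP => [[ ]]; move/eqP: neq.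
Qed.

Lemma has_nbr v : v < n -> exists w, E v w.
Proof.
move=> hv; have [y hy] := Hiso (Ordinal hv).
by exists y; rewrite -[v]/(val (Ordinal hv)) EP.
Qed.

Definition J (x v : nat) : bool := [exists y : 'I_n, (v < y) && E x y].

Lemma JP x v : reflect (exists w, v < w /\ E x w) (J x v).
Proof.
apply: (iffP existsP) => [[y /andP [h1 h2]]|[w [h1 h2]]]; first by exists y.
have [_ hw] := E_lt h2.
by exists (Ordinal hw); rewrite h1.
Qed.

Definition step (st : nat * nat) (v : nat) : nat * nat :=
  let: (x1, x2) := st in
  if E x1 v then (v, x2) else if E x2 v then (x1, v)
  else if J x1 v then (x1, v) else (v, x2).

Fixpoint S (v : nat) : nat * nat :=
  match v with
  | 0 => (0, 0)
  | v'.+1 => if Sep v'.+1 then (v'.+1, v'.+1) else step (S v') v'.+1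
  end.

Definition Inv v (st : nat * nat) :=
  [/\ st.1 <= v, st.2 <= v,
   forall u w, E u w -> u <= v < w -> u = st.1 \/ u = st.2 &
   st.1 != st.2 -> forall x w w', (x = st.1 \/ x = st.2) ->
      E x w -> E x w' -> v < w -> v < w' -> w = w'].

Lemma Inv_S v : Inv v (S v).
Proof.
elim: v => [|v IH].
  split => //=; move=> u w _ h; left; lia.
rewrite /=; case: ifP => hsep.
  split => //=; last by rewrite eqxx.
  move=> u w huw h; left.
  case: (ltnP u v.+1) => hu; last by lia.
  by exfalso; apply: (Sep_edge hsep huw) => //; lia.
move/negbT: hsep => hsep.
have [_ hV] := nSep_lt hsep.
move: IH; rewrite /Inv; case: (S v) => x1 x2 /= [IH1 IH2 IH3 IH4].
case: ifP => e1.
  split => //=; first by lia.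
  - move=> u w huw h.
    case: (eqVneq u v.+1) => [->|neq]; first by left.
    have [hu|hu] := IH3 u w huw ltac:(lia); subst u; last by right.
    case: (eqVneq x1 x2) => [->|n12]; first by right.
    by have := IH4 n12 x1 v.+1 w (or_introl erefl) e1 huw ltac:(lia) ltac:(lia); lia.
  - move=> nV x w w' [->|->] h1 h2 l1 l2; first exact: (right1 hsep).
    case: (eqVneq x1 x2) => [eq12|n12]; last first.
      by apply: (IH4 n12 x2) => //; [right|lia|lia].
    case: (eqVneq w w') => // nw; exfalso.
    rewrite eq12 in e1.
    apply: (@cut3 v x2 v.+1 x2 w x2 w') => //; try lia.
    + by apply/eqP => [[ ]]; lia.
    + by apply/eqP => [[ ]]; lia.
    + by apply/eqP => [[ ]]; move/eqP: nw.
case: ifP => e2.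
  split => //=; first by lia.
  - move=> u w huw h.
    case: (eqVneq u v.+1) => [->|neq]; first by right.
    have [hu|hu] := IH3 u w huw ltac:(lia); subst u; first by left.
    case: (eqVneq x1 x2) => [->|n12]; first by left.
    by have := IH4 n12 x2 v.+1 w (or_intror erefl) e2 huw ltac:(lia) ltac:(lia); lia.
  - move=> nV x w w' [->|->] h1 h2 l1 l2; last exact: (right1 hsep).
    case: (eqVneq x1 x2) => [eq12|n12]; last first.
      by apply: (IH4 n12 x1) => //; [left|lia|lia].
    by rewrite eq12 e2 in e1.
have [r hr] := has_nbr (ltnW hV).
have hr' : v.+1 < r.
  case: (ltngtP v.+1 r) => // [hlt|heq]; last by exfalso; subst r; apply: (E_irr hr).
  have := IH3 r v.+1 (E_sym hr) ltac:(lia).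
  by case=> hh; subst r; [rewrite (E_sym hr) in e1|rewrite (E_sym hr) in e2].
case: ifP => /JP hJ.
  case: hJ => y [hy1 hy2].
  split => //=; first by lia.
  - move=> u w huw h.
    case: (eqVneq u v.+1) => [->|neq]; first by right.
    have [hu|hu] := IH3 u w huw ltac:(lia); subst u; first by left.
    case: (eqVneq x1 x2) => [->|n12]; first by left.
    exfalso; apply: (@cut3 v.+1 x1 y x2 w v.+1 r) => //; try lia.
    + by apply/eqP => [[ ]]; move/eqP: n12.
    + by apply/eqP => [[ ]]; lia.
    + by apply/eqP => [[ ]]; lia.
  - move=> nV x w w' [->|->] h1 h2 l1 l2; last exact: (right1 hsep).
    case: (eqVneq w w') => // nw; exfalso.
    apply: (@cut3 v.+1 x1 w x1 w' v.+1 r) => //; try lia.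
    + by apply/eqP => [[ ]]; move/eqP: nw.
    + by apply/eqP => [[ ]]; lia.
    + by apply/eqP => [[ ]]; lia.
split => //=; first by lia.
- move=> u w huw h.
  case: (eqVneq u v.+1) => [->|neq]; first by left.
  have [hu|hu] := IH3 u w huw ltac:(lia); subst u; last by right.
  case: (eqVneq x1 x2) => [->|n12]; first by right.
  by exfalso; apply: hJ; exists w; split => //; lia.
- move=> nV x w w' [->|->] h1 h2 l1 l2; first exact: (right1 hsep).
  case: (eqVneq w w') => // nw; exfalso.
  apply: (@cut3 v.+1 x2 w x2 w' v.+1 r) => //; try lia.
  + by apply/eqP => [[ ]]; move/eqP: nw.
  + by apply/eqP => [[ ]]; lia.
  + by apply/eqP => [[ ]]; lia.
Qed.

Lemma S_sep s : Sep s -> S s = (s, s).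
Proof. by case: s => [|s] //= ->. Qed.

Lemma S_nsep v : ~~ Sep v -> S v = step (S v.-1) v.
Proof.
move=> h; have [hv _] := nSep_lt h.
by case: v hv h => [|v] //= _ /negbTE ->.
Qed.

Lemma step_cases st v : step st v = (v, st.2) \/ step st v = (st.1, v).
Proof.
case: st => x1 x2 /=.
by case: ifP => _; [left|case: ifP => _; [right|case: ifP => _; [right|left]]].
Qed.

Lemma S_ge s v : Sep s -> s <= v -> s <= (S v).1 /\ s <= (S v).2.
Proof.
move=> hs; elim: v => [|v IH] hv.
  by have -> : s = 0 by lia.
case: (eqVneq s v.+1) => [<-|neq]; first by rewrite S_sep.
have {}IH := IH ltac:(lia).
rewrite /=; case: ifP => _ /=; first by lia.
by case: (step_cases (S v) v.+1) => -> /=; lia.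
Qed.

Definition prj (c : bool) (st : nat * nat) := if c then st.1 else st.2.

Lemma prj_step c st v : prj c (step st v) = prj c st \/ prj c (step st v) = v.
Proof. by case: c; case: (step_cases st v) => -> /=; auto. Qed.

Lemma prj_le c v : prj c (S v) <= v.
Proof. by case: (Inv_S v) => h1 h2 _ _; case: c. Qed.

Lemma int_one y : ~~ Sep y -> ~~ (((S y).1 == y) && ((S y).2 == y)).
Proof.
move=> h; have [hy _] := nSep_lt h.
rewrite (S_nsep h).
have h1 := prj_le true y.-1; have h2 := prj_le false y.-1.
move: h1 h2; rewrite /prj.
by case: (step_cases (S y.-1) y) => -> /= h1 h2; apply/negP => /andP [/eqP a /eqP b]; lia.
Qed.

Section Seg.
Variables (s t : nat).
Hypothesis Hs : Sep s.
Hypothesis Ht : Sep t.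
Hypothesis Hst : s < t.
Hypothesis Hin : forall y, s < y < t -> ~~ Sep y.

Lemma tr_mono c y v : s <= y <= v -> v < t -> prj c (S y) <= prj c (S v).
Proof.
elim: v => [|v IH] hy hv.
  by have -> : y = 0 by lia.
case: (eqVneq y v.+1) => [->|neq] //.
have {}IH := IH ltac:(lia) ltac:(lia).
rewrite (S_nsep (Hin (y := v.+1) ltac:(lia))) /=.
have := prj_le c v.
by case: (prj_step c (S v) v.+1) => ->; lia.
Qed.

Lemma tr_end c v : s <= v -> v < t ->
  prj c (S v) = s \/ (s < prj c (S v) <= v /\ prj c (S (prj c (S v))) = prj c (S v)).
Proof.
elim: v => [|v IH] hv ht.
  have hs0 : s = 0 by lia.
  by rewrite hs0; left; rewrite /prj; case: (c).
case: (eqVneq s v.+1) => [<-|neq].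
  by rewrite S_sep //; left; rewrite /prj; case: (c).
have {}IH := IH ltac:(lia) ltac:(lia).
rewrite (S_nsep (Hin (y := v.+1) ltac:(lia))) /=.
case: (prj_step c (S v) v.+1) => hst; rewrite hst; last first.
  have hh : prj c (S v.+1) = v.+1.
    by rewrite (S_nsep (Hin (y := v.+1) ltac:(lia))) /=.
  by right; split; [lia|].
case: IH => [->|[h1 h2]]; first by left.
by right; split => //; lia.
Qed.

Lemma tr_between c v y : s <= v -> v < t -> prj c (S v) < y <= v -> prj c (S y) != y.
Proof.
move=> h1 h2 h3.
have [g1 g2] := S_ge Hs h1.
have hp : s <= prj c (S v) by rewrite /prj; case: (c).
have := tr_mono c (y := y) (v := v) ltac:(lia) h2.
apply: contraL => /eqP ->; lia.
Qed.

Lemma seg_track u w : s <= u -> u < w -> w <= t -> E u w ->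
  exists c, [/\ u = s \/ (s < u /\ prj c (S u) = u),
               w = t \/ (w < t /\ prj c (S w) = w) &
               forall y, u < y < w -> prj c (S y) != y].
Proof.
move=> hu huw hwt he.
have hv : s <= w.-1 < t by lia.
case: (Inv_S w.-1) => _ _ I3 _.
have hux := I3 u w he ltac:(lia).
have good : forall c, u = prj c (S w.-1) ->
   (u = s \/ (s < u /\ prj c (S u) = u)) /\
   (forall y, u < y < w -> prj c (S y) != y).
  move=> c hc; split.
    case: (tr_end c (v := w.-1) ltac:(lia) ltac:(lia)) => [h0|[h1 h2]].
      by left; rewrite hc h0.
    by right; rewrite hc; split => //; lia.
  move=> y hy; apply: (tr_between (v := w.-1)); lia.
have hcase : w < t \/ w = t by lia.
case: hcase => [hwt'|hwe]; last first.
  case: hux => hux.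
    by exists true; have [g1 g2] := good true hux; split => //; left.
  by exists false; have [g1 g2] := good false hux; split => //; left.
have hw : ~~ Sep w := Hin (y := w) ltac:(lia).
have hSw := S_nsep hw.
have hb1 := prj_le true w.-1; have hb2 := prj_le false w.-1.
have good1 := good true; have good2 := good false.
move: hux hSw hb1 hb2 good1 good2; rewrite /prj; case: (S w.-1) => x1 x2 /= hux hSw hb1 hb2 good1 good2.
move: hSw; rewrite /step.
case: ifP => e1 hSw.
  have hx1 : u = x1.
    case: hux => // hh; subst u.
    by rewrite (left1 hw e1 he) //; lia.
  exists true; have [g1 g2] := good1 hx1; split => //.
  by right; rewrite hSw.
case: ifP hSw => e2 hSw.
  have hx2 : u = x2.
    by case: hux => // hh; subst u; rewrite he in e1.
  exists false; have [g1 g2] := good2 hx2; split => //.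
  by right; rewrite hSw.
by case: hux => hh; subst u; [rewrite he in e1|rewrite he in e2].
Qed.

Definition trk c := [seq y <- iota s.+1 (t - s).-1 | prj c (S y) == y].

Lemma mem_trk c y : (y \in trk c) = (s < y < t) && (prj c (S y) == y).
Proof.
rewrite mem_filter mem_iota andbC; congr (_ && _).
apply/idP/idP => /andP [h1 h2]; apply/andP; split; lia.
Qed.

Lemma trk_split c :
  filter (fun y => (y == s) || (y == t) || (prj c (S y) == y)) (iota s (t - s).+1)
  = s :: trk c ++ [:: t].
Proof.
have hm : (t - s) = (t - s).-1 + 1 by lia.
rewrite /= eqxx /= hm iotaD filter_cat /=.
have -> : s.+1 + (t - s).-1 = t by lia.
rewrite eqxx orbT /=; congr (_ :: _ ++ _).
apply: eq_in_filter => y; rewrite mem_iota => hy.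
have -> : (y == s) = false by apply/negbTE; apply/eqP; lia.
by have -> : (y == t) = false by apply/negbTE; apply/eqP; lia.
Qed.

Definition Zc d := s :: trk true ++ t ::
  (if (trk true == [::]) && (trk false == [::]) then [:: d] else rev (trk false)).

Lemma uniq_Zc d : t < d -> uniq (Zc d).
Proof.
move=> hd.
have hA : forall y, y \in trk true -> s < y < t by move=> y; rewrite mem_trk => /andP [].
have hB : forall y, y \in trk false -> s < y < t by move=> y; rewrite mem_trk => /andP [].
have ut : forall c, uniq (trk c) by move=> c; apply: filter_uniq; apply: iota_uniq.
have hAB : forall y, y \in trk true -> y \notin trk false.
  move=> y; rewrite !mem_trk => /andP [hy h1]; rewrite hy /=.
  have := int_one (Hin hy); rewrite /prj in h1 *.
  by rewrite h1 /=.
rewrite /Zc; apply: uniq3 => //.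
- by apply/negP => /hA; lia.
- by apply/eqP; lia.
- case: ifP => _; rewrite ?inE ?mem_rev; first by apply/eqP; lia.
  by apply/negP => /hB; lia.
- by apply/negP => /hA; lia.
- move=> y hy; case: ifP => _; rewrite ?inE ?mem_rev; last exact: hAB.
  by have := hA y hy; apply: contraL => /eqP ->; lia.
- case: ifP => _; rewrite ?inE ?mem_rev; first by apply/eqP; lia.
  by apply/negP => /hB; lia.
- by case: ifP => _ //; rewrite rev_uniq.
Qed.

Lemma size_Zc d : 3 <= size (Zc d).
Proof.
rewrite /Zc /= size_cat /=; case: ifP => [_|] /=; first by lia.
case: (trk true) => [|a A] /=; last by lia.
by case: (trk false) => [|b B] //=; rewrite size_rev /=; lia.
Qed.

Lemma mem_Zc d x : x \in Zc d -> (s <= x <= t) \/ x = d.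
Proof.
rewrite /Zc inE mem_cat inE => /or3P [/eqP ->|hA|/orP [/eqP ->|hX]].
- by left; lia.
- by left; move: hA; rewrite mem_trk => /andP [h _]; lia.
- by left; lia.
- move: hX; case: ifP => _; first by rewrite inE => /eqP ->; right.
  by rewrite mem_rev mem_trk => /andP [h _]; left; lia.
Qed.

Lemma s_Zc d : s \in Zc d.
Proof. by rewrite /Zc inE eqxx. Qed.

Lemma t_Zc d : t \in Zc d.
Proof. by rewrite /Zc inE mem_cat inE eqxx !orbT. Qed.

Lemma seg_edge d u w : t < d -> s <= u -> u < w -> w <= t -> E u w ->
  cycle_edge (Zc d) u w.
Proof.
move=> hd hu huw hwt he.
have [c [c1 c2 c3]] := seg_track hu huw hwt he.
have [p [q hpq]] : exists p q, s :: trk c ++ [:: t] = p ++ u :: w :: q.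
  rewrite -trk_split; apply: consec; try lia.
  - move=> y hy; rewrite /= (negbTE (c3 y hy)) orbF; apply/norP; split; apply/eqP; lia.
have U := uniq_Zc hd.
rewrite /cycle_edge.
case: c hpq {c1 c2 c3} => hpq.
  have hZ : Zc d = p ++ u :: w :: (q ++
     (if (trk true == [::]) && (trk false == [::]) then [:: d] else rev (trk false))).
    rewrite /Zc; set X := (if _ then _ else _).
    transitivity ((s :: trk true ++ [:: t]) ++ X); first by rewrite /= -catA.
    by rewrite hpq -catA.
  rewrite hZ in U *; rewrite next_consec // eqxx /= andbT.
  by rewrite !(mem_cat, inE, eqxx, orbT).
case hAB : ((trk true == [::]) && (trk false == [::])).
  case/andP: hAB => /eqP hA /eqP hB.
  move: hpq; rewrite hB /=.
  case: p => [|a [|b p]] /=; last by case: p.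
    case=> <- <- _; rewrite /Zc hA /= eqxx /=.
    by rewrite /next /= eqxx !inE !eqxx orbT.
  by case=> _ _ /eqP.
have hr : rot (size (s :: trk true)) (Zc d) = rev (p ++ u :: w :: q) ++ trk true.
  rewrite /Zc hAB -cat_cons rot_size_cat -hpq.
  by rewrite rev_cons rev_cat /= -cats1 -catA.
have U' : uniq (rot (size (s :: trk true)) (Zc d)) by rewrite rot_uniq.
rewrite -(next_rot (size (s :: trk true)) U w) hr rev_mid -catA /= next_consec; last first.
  by move: U'; rewrite hr rev_mid -catA.
rewrite eqxx orbT andbT.
by rewrite -(mem_rot (size (s :: trk true)) (Zc d) u) -(mem_rot (size (s :: trk true)) (Zc d) w) hr !(mem_cat, inE, eqxx, orbT, mem_rev).
Qed.

End Seg.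

Lemma find_seg (f : nat -> nat) u m : f 0 <= u -> u < f m ->
  exists j, j < m /\ f j <= u < f j.+1.
Proof.
move=> h0; elim: m => [|m IH] hm; first by lia.
case: (ltnP u (f m)) => h.
  by have [j [h1 h2]] := IH h; exists j; split => //; lia.
by exists m; split => //; lia.
Qed.

Hypothesis Hn : 1 < n.

Definition sl := [seq v <- iota 0 n | Sep v].
Definition sv j := nth 0 sl j.

Lemma Sep0 : Sep 0.
Proof. by apply/negP => /existsP [u /existsP [w /andP [_ /andP [h _]]]]. Qed.

Lemma Sepn : Sep n.-1.
Proof.
apply/negP => /existsP [u /existsP [w /andP [_ /andP [_ h]]]].
by have := ltn_ord w; lia.
Qed.

Lemma sl_sorted : sorted ltn sl.
Proof. by apply: sorted_filter; [exact: ltn_trans|exact: iota_ltn_sorted]. Qed.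

Lemma sv0 : sv 0 = 0.
Proof.
rewrite /sv /sl; case: n Hn => [|m] //= _.
by rewrite Sep0.
Qed.

Lemma size_sl : size sl = (size [seq v <- iota 0 n.-1 | Sep v]).+1.
Proof.
rewrite /sl; have -> : n = n.-1 + 1 by lia.
by rewrite iotaD filter_cat /= add0n addn1 /= Sepn size_cat /= addn1.
Qed.

Lemma svlast : sv (size sl).-1 = n.-1.
Proof.
rewrite size_sl /= /sv /sl.
have -> : n = n.-1 + 1 by lia.
rewrite iotaD filter_cat /= add0n addn1 /= Sepn nth_cat ltnn subnn /=.
by lia.
Qed.

Lemma sv_sep j : j < size sl -> Sep (sv j) /\ sv j < n.
Proof.
move=> hj; have := mem_nth 0 hj; rewrite -/(sv j) mem_filter mem_iota.
by case/andP => -> /andP [_ h]; split => //; lia.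
Qed.

Lemma sv_mono i j : i < size sl -> j < size sl -> i < j -> sv i < sv j.
Proof.
move=> hi hj hij.
exact: (sorted_ltn_nth ltn_trans 0 sl_sorted).
Qed.

Lemma sv_lt i j : i < size sl -> j < size sl -> (sv i < sv j) = (i < j).
Proof.
move=> hi hj; case: (ltngtP i j) => h.
- by rewrite sv_mono.
- by apply/negbTE; rewrite -leqNgt ltnW // sv_mono.
- by rewrite h ltnn.
Qed.

Lemma sv_cons j y : j.+1 < size sl -> sv j < y < sv j.+1 -> ~~ Sep y.
Proof.
move=> hj hy; apply/negP => hs.
have [_ hn'] := sv_sep hj.
have hin : y \in sl by rewrite mem_filter hs mem_iota /=; lia.
have hi : index y sl < size sl by rewrite index_mem.
have := nth_index 0 hin; rewrite -/(sv (index y sl)) => hyi.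
move: hy; rewrite -hyi (sv_lt _ hi) ?(sv_lt hi) //; try lia.
Qed.

Lemma sl_ge2 : 1 < size sl.
Proof.
rewrite size_sl ltnS lt0n size_eq0; apply/eqP => h.
have : 0 \in [seq v <- iota 0 n.-1 | Sep v] by rewrite mem_filter Sep0 mem_iota; lia.
by rewrite h.
Qed.

Lemma edge_seg u w : E u w -> u < w ->
  exists j, [/\ j.+1 < size sl, sv j <= u & w <= sv j.+1].
Proof.
move=> he huw.
have [_ hw] := E_lt he.
have hk := sl_ge2.
have [j [hj1 hj2]] : exists j, j < (size sl).-1 /\ sv j <= u < sv j.+1.
  apply: find_seg; rewrite ?sv0 ?svlast; lia.
exists j; split; try lia.
have [hs _] := sv_sep (j := j.+1) ltac:(lia).
case: (leqP w (sv j.+1)) => // hlt.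
by exfalso; apply: (Sep_edge hs he); lia.
Qed.

Lemma cycle_edgeC c x y : cycle_edge c x y = cycle_edge c y x.
Proof. by rewrite /cycle_edge; case: (x \in c); case: (y \in c) => //=; rewrite orbC. Qed.

Definition Zj j := Zc (sv j) (sv j.+1) (n + j).

Lemma seg_hyps j : j.+1 < size sl ->
  [/\ Sep (sv j), Sep (sv j.+1), sv j < sv j.+1 &
      forall y, sv j < y < sv j.+1 -> ~~ Sep y].
Proof.
move=> hj; have [h1 _] := sv_sep (j := j) ltac:(lia).
have [h2 _] := sv_sep hj.
split => //; last by move=> y; apply: (sv_cons hj).
by rewrite sv_lt //; lia.
Qed.

Lemma main_sec : exists (Z : nat -> seq nat) (a b : nat -> nat),
    chain_of_cycles (size sl).-1 Z a b /\
    exists f : 'I_n -> nat,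
      [/\ injective f,
          forall u v : 'I_n, e u v -> chain_edge (size sl).-1 Z (f u) (f v),
          forall x : 'I_n, val x = 0 -> f x = a 0 &
          forall x : 'I_n, val x = n.-1 -> f x = b ((size sl).-1).-1].
Proof.
have hk := sl_ge2.
exists Zj, sv, (fun j => sv j.+1); split.
  split.
  - move=> j hj; have [h1 h2 h3 h4] := seg_hyps (j := j) ltac:(lia).
    have [_ hn'] := sv_sep (j := j.+1) ltac:(lia).
    split; [apply/andP; split|exact: s_Zc|exact: t_Zc].
    + by apply: uniq_Zc => //; lia.
    + exact: size_Zc.
  - move=> i j hi hj hij x; apply/negP => /andP [hx1 hx2].
    have [h1 h2 h3 h4] := seg_hyps (j := i) ltac:(lia).
    have [g1 g2 g3 g4] := seg_hyps (j := j) ltac:(lia).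
    have [_ hn'] := sv_sep (j := j.+1) ltac:(lia).
    have hlt : sv i.+1 < sv j by rewrite sv_lt; lia.
    have := mem_Zc h1 h2 h3 hx1; have := mem_Zc g1 g2 g3 hx2.
    lia.
  - move=> j hj; have hj1 : j.-1.+1 = j by lia.
    split; last by rewrite hj1.
    move=> x.
    have [h1 h2 h3 h4] := seg_hyps (j := j.-1) ltac:(lia).
    have [g1 g2 g3 g4] := seg_hyps (j := j) ltac:(lia).
    have [_ hn'] := sv_sep (j := j.+1) ltac:(lia).
    rewrite hj1 in h1 h2 h3 h4 *.
    apply/idP/idP.
      case/andP => hx1 hx2; rewrite /Zj hj1 in hx1.
      have := mem_Zc h1 h2 h3 hx1; have := mem_Zc g1 g2 g3 hx2.
      by move=> A B; apply/eqP; lia.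
    move/eqP => ->; rewrite /Zj; apply/andP; split.
      by have := t_Zc (sv j.-1) (sv j.-1.+1) (n + j.-1); rewrite hj1.
    exact: s_Zc.
exists val; split.
- exact: val_inj.
- move=> u v huv.
  have hne : val u != val v.
    by apply: contraTneq huv => h; rewrite (val_inj h) Hirr.
  have key : forall x y : 'I_n, e x y -> val x < val y ->
      chain_edge (size sl).-1 Zj (val x) (val y).
    move=> x y hxy hlt.
    have he : E x y by rewrite EP.
    have [j [hj h1 h2]] := edge_seg he hlt.
    have [g1 g2 g3 g4] := seg_hyps hj.
    have [_ hn'] := sv_sep hj.
    exists j; first by lia.
    by apply: seg_edge => //; lia.
  case: (ltngtP (val u) (val v)) => h.
  + exact: key.
  + have := key v u ltac:(by rewrite Hsym) h.
    by case=> j hj hc; exists j => //; rewrite cycle_edgeC.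
  + by rewrite h eqxx in hne.
- by move=> x ->; rewrite sv0.
- move=> x ->; have -> : (size sl).-1.-1.+1 = (size sl).-1 by lia.
  by rewrite svlast.
Qed.

End Main.

Lemma card_sl n (e : rel 'I_n) : #|[set i : 'I_n | separating e i]| = size (sl e).
Proof.
rewrite cardsE cardE /enum_mem size_filter -enumT /sl size_filter -val_enum_ord count_map.
by apply: eq_count => x.
Qed.

Lemma iso n (e : rel 'I_n) : 2 <= n -> connected_graph e -> forall x : 'I_n, exists y, e x y.
Proof.
move=> hn hc x.
have [y hy] : exists y : 'I_n, y != x.
  have h0 : 0 < n by lia. have h1 : 1 < n by lia.
  case: (eqVneq (val x) 0) => h.
    by exists (Ordinal h1); apply/eqP => hh; rewrite -hh in h.
  by exists (Ordinal h0); apply/eqP => hh; rewrite -hh in h.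
case/connectP: (hc x y) => [[|z p]] /=.
  by move=> _ h; rewrite h eqxx in hy.
by case/andP => hz _ _; exists z.
Qed.

Theorem mainTheorem4 (k n : nat) (e : rel 'I_n) :
  2 <= k -> 2 <= n ->
  simple_graph e ->
  connected_graph e ->
  (forall i, 1 <= i <= n.-1 -> cut_size e i.-1 <= 2) ->
  #|[set i : 'I_n | separating e i]| = k ->
  exists (Z : nat -> seq nat) (a b : nat -> nat),
    chain_of_cycles k.-1 Z a b /\
    exists f : 'I_n -> nat,
      [/\ injective f,
          forall u v : 'I_n, e u v -> chain_edge k.-1 Z (f u) (f v),
          forall x : 'I_n, val x = 0 -> f x = a 0 &
          forall x : 'I_n, val x = n.-1 -> f x = b (k.-1).-1].
Proof.
move=> hk hn [Hsym Hirr] hc hcut hcard.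
have := main_sec Hsym Hirr hcut (@iso n e hn hc) hn.
by rewrite -card_sl hcard.
Qed.
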